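(* Let $W$ be a finite set and $\mathtt{N}=\{N_1,\ldots,N_r\}$ a sequence of subsets of $W$ with $N_1\cup\cdots\cup N_r=W$. Put $M_i=N_i-(N_1\cup\cdots\cup N_{i-1})$, $\mathtt{M}=\{M_1,\ldots,M_r\}$, and $U=\widetilde{M}_2\cup\cdots\cup\widetilde{M}_r$. Then $$\mathbb{R}\mathcal{Z}_{K(\mathtt{M})}\cong S^{|M_1|}\times\cdots\times S^{|M_r|},\qquad\mathbb{R}\mathcal{Z}_{K(\mathtt{M})_U}\cong S^{|M_2|}\times\cdots\times S^{|M_r|}.$$
   Context: For a sequence $\mathtt{N}=\{N_1,\ldots,N_r\}$ of subsets of $W$ (repetitions allowed), choose distinct points $a_1,\ldots,a_r\notin W$, $\widetilde{N}_i=N_i\sqcup\{a_i\}$; $K(\mathtt{N})$ is the simplicial complex on $W\sqcup\{a_1,\ldots,a_r\}$ with minimal non-faces exactly $\widetilde{N}_1,\ldots,\widetilde{N}_r$. $K(\mathtt{M})$ uses the same points, $\widetilde{M}_i=M_i\sqcup\{a_i\}$. For a vertex subset $U$, $K_U=\{\sigma\in K\mid\sigma\subset U\}$ as a complex on vertex set $U$. For a simplicial complex $K$ on vertex set $V$, the real moment-angle complex is $\mathbb{R}\mathcal{Z}_K=\bigcup_{\sigma\in K}\prod_{v\in V}Y_v$ with $Y_v=CS^0$ (reduced cone on $S^0$, an interval) if $v\in\sigma$ and $Y_v=S^0$ otherwise. *)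

(* Defs.v *)
From HB Require Import structures.
From mathcomp Require Import all_boot all_order all_algebra.
From mathcomp Require Import all_classical all_reals.
From mathcomp Require Import topology_theory.topology normedtype.
Import numFieldNormedType.Exports.
Set Implicit Arguments. Unset Strict Implicit. Unset Printing Implicit Defensive.
Import Order.TTheory GRing.Theory Num.Theory.
Local Open Scope ring_scope.

Notation Rspace R T := ({ptws T -> R}%type) (only parsing).

Definition homeomorphic (X Y : topologicalType) (A : set X) (B : set Y) : Prop :=
  exists (f : X -> Y) (g : Y -> X),
    [/\ (forall x, A x -> B (f x)), (forall y, B y -> A (g y)),
        (forall x, A x -> g (f x) = x), (forall y, B y -> f (g y) = y) &
        ({within A, continuous f}%classic /\ {within B, continuous g}%classic)].

(* Real moment-angle complex of the simplicial complex on vertex set T whose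
   faces are given by [face]: union over faces sigma of prod_v Y_v with
   Y_v = [-1,1] (= CS^0) if v in sigma, Y_v = {-1,1} (= S^0) otherwise. *)
Definition RZ (R : realType) (T : finType) (face : pred {set T}) :
    set (Rspace R T) :=
  [set x : Rspace R T | exists sigma : {set T}, face sigma /\
     forall v : T, if v \in sigma then ((-1 <= (x v : R) <= 1) : Prop)
                   else ((x v : R) = -1 \/ (x v : R) = 1)]%classic.

(* Vertex set W ⊔ {a_1,...,a_r}: a_i is represented by inr i. *)
Definition vert (W : finType) (r : nat) := (W + 'I_r)%type.

Definition tilde (W : finType) (r : nat) (N : 'I_r -> {set W}) (i : 'I_r) :
    {set vert W r} :=
  (inl @: N i) :|: [set inr i].

(* K(N): simplicial complex on vert W r whose minimal non-faces are exactly
   the tilde N_i: faces are the subsets containing no tilde N_i. *)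
Definition KN (W : finType) (r : nat) (N : 'I_r -> {set W}) : pred {set vert W r} :=
  fun sigma => [forall i, ~~ (tilde N i \subset sigma)].

Definition full_sub (T : finType) (K : pred {set T}) (U : {set T}) :
    pred {set {v : T | v \in U}} :=
  fun tau => K [set val x | x in tau].

Definition Mseq (W : finType) (r : nat) (N : 'I_r -> {set W}) (i : 'I_r) : {set W} :=
  N i :\: \bigcup_(j : 'I_r | (j < i)%N) N j.

(* S^n = unit sphere in R^(n+1); a product of spheres S^{d_i}, i in I,
   as a subspace of R^{sum_i (d_i+1)}. *)
Definition sphere_prod (R : realType) (I : finType) (d : I -> nat) :
    set (Rspace R {i : I & 'I_(d i).+1}) :=
  [set x : Rspace R {i : I & 'I_(d i).+1} |
     forall i : I, \sum_(j < (d i).+1) (x (Tagged _ j) : R) ^+ 2 = 1]%classic.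

(* Main.v *)
Require Import Defs.
From HB Require Import structures.
From mathcomp Require Import all_boot all_order all_algebra.
From mathcomp Require Import all_classical all_reals.
From mathcomp Require Import topology_theory.topology normedtype.
From mathcomp Require Import realfun.
Import numFieldNormedType.Exports.
Set Implicit Arguments. Unset Strict Implicit. Unset Printing Implicit Defensive.
Import Order.TTheory GRing.Theory Num.Theory.
Local Open Scope ring_scope.
Section C.
Local Open Scope classical_set_scope.
Variables (R : realType) (T : finType).
Lemma proj_cont (t : T) : continuous (fun x : {ptws T -> R} => x t).
Proof.
move=> x.
exact: (@proj_continuous T (fun _ => R) t x).
Qed.

Lemma ptws_cont (X : topologicalType) (f : X -> {ptws T -> R}) x :
  (forall t, {for x, continuous (fun y => f y t)}) -> {for x, continuous f}.
Proof.
move=> H.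
have := (@pointwise_cvgP (discrete_topology T) R (f @ x) (f x) _).2 H.
exact.
Qed.

Lemma add_cont : continuous (fun z : R * R => z.1 + z.2).
Proof. move=> z. apply: cvgD. exact: cvg_fst. exact: cvg_snd. Qed.
Lemma max_cont : continuous (fun z : R * R => Num.max z.1 z.2).
Proof. move=> z. have := @continuous_max R (R * R)%type fst snd z.
  apply. exact: cvg_fst. exact: cvg_snd. Qed.
End C.

Section Max.
Variables (R : realType) (X : finType) (P : pred X) (F : X -> R).
Hypothesis F0 : forall x, 0 <= F x.

Lemma bmax_ge x : P x -> F x <= \big[Num.max/0]_(y | P y) F y.
Proof. by move=> Px; rewrite (bigD1 x) //= le_max lexx. Qed.

Lemma bmax_cases : \big[Num.max/0]_(y | P y) F y = 0 \/
  exists x, P x /\ \big[Num.max/0]_(y | P y) F y = F x.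
Proof.
apply: (big_ind (fun v => v = 0 \/ exists x, P x /\ v = F x)); first by left.
- move=> a b Ha Hb; case: (leP a b) => _; [exact: Hb| exact: Ha].
- by move=> x Px; right; exists x.
Qed.

Lemma bmax_eq c x0 : P x0 -> F x0 = c -> (forall x, P x -> F x <= c) ->
  \big[Num.max/0]_(y | P y) F y = c.
Proof.
move=> Px0 Fx0 Hle; apply/eqP; rewrite eq_le; apply/andP; split; last first.
  by rewrite -Fx0; apply: bmax_ge.
case: bmax_cases => [->|[x [Px ->]]]; last exact: Hle.
by rewrite -Fx0.
Qed.
End Max.

Definition Acube (R : realType) (T I : finType) (p : T -> I) : set {ptws T -> R} :=
  [set x | (forall t, `|x t| <= 1) /\ forall i, exists t, p t = i /\ `|x t| = 1]%classic.

Lemma RZ_Acube (R : realType) (T I : finType) (p : T -> I) (face : pred {set T}) :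
  (forall sigma, face sigma <-> forall i, ~ ([set t | p t == i] \subset sigma)) ->
  @RZ R T face = @Acube R T I p.
Proof.
move=> Hf; apply/seteqP; split => x /=.
  move=> [sigma [/Hf Fs Hx]]; split.
    move=> t; have := Hx t; case: (t \in sigma) => [|[] ->].
      by rewrite ler_norml.
    by rewrite normrN normr1.
    by rewrite normr1.
  move=> i; have /subsetPn [t] : ~~ ([set t | p t == i] \subset sigma) by apply/negP; exact: Fs.
  rewrite inE => /eqP pt tn; exists t; split => //.
  by have := Hx t; rewrite (negbTE tn) => -[] ->; rewrite ?normrN normr1.
move=> [H1 H2]; exists [set t | `|x t| != 1]; split.
  apply/Hf => i /fintype.subsetP Hs; have [t [pt xt]] := H2 i.
  have := Hs t; rewrite !inE pt eqxx xt eqxx => /(_ isT).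
  done.
move=> v; rewrite inE; case: eqP => [xv|_]; last by rewrite -ler_norml; apply: H1.
move/eqP: xv; rewrite /= eqr_norml ler01 andbT => /orP [] /eqP ->; by [right|left].
Qed.

Lemma bij_exists (T I : finType) (d : I -> nat) (p : T -> I) :
  (forall i, #|[set t | p t == i]| = (d i).+1) ->
  exists (h : T -> {i : I & 'I_(d i).+1}) (h' : {i : I & 'I_(d i).+1} -> T),
    [/\ cancel h h', cancel h' h & forall t, tag (h t) = p t].
Proof.
move=> hc.
pose h' (s : {i : I & 'I_(d i).+1}) : T :=
  @enum_val T [set t | p t == tag s] (cast_ord (esym (hc (tag s))) (tagged s)).
have mt t : t \in [set u | p u == p t] by rewrite inE.
pose h (t : T) : {i : I & 'I_(d i).+1} :=
  Tagged (fun i => 'I_(d i).+1) (cast_ord (hc (p t)) (enum_rank_in (mt t) t)).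
have hK : cancel h h'.
  by move=> t; rewrite /h' /h /= cast_ordK enum_rankK_in.
have ph' s : p (h' s) = tag s.
  by apply/eqP; have := @enum_valP T [set t | p t == tag s] (cast_ord (esym (hc (tag s))) (tagged s)); rewrite inE.
have h'inj : injective h'.
  move=> [i1 j1] [i2 j2] E.
  have E1 : i1 = i2 by have := ph' (Tagged _ j1); rewrite E ph'.
  subst i2; move: E; rewrite /h' /= => /enum_val_inj /cast_ord_inj ->.
  done.
have h'K : cancel h' h by move=> s; apply: h'inj; rewrite hK.
by exists h, h'; split.
Qed.

Definition Sph (R : realType) (I : finType) (d : I -> nat) :
  set {ptws {i : I & 'I_(d i).+1} -> R} :=
  [set y | forall i, \sum_(s | tag s == i) y s ^+ 2 = 1]%classic.

Section Main.
Local Open Scope classical_set_scope.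
Context (R : realType) (T I : finType) (d : I -> nat) (p : T -> I).
Local Notation S := {i : I & 'I_(d i).+1}.
Context (h : T -> S) (h' : S -> T) (hK : cancel h h') (h'K : cancel h' h)
  (hp : forall t, tag (h t) = p t).

Definition n2 (x : T -> R) i := Num.sqrt (\sum_(t | p t == i) x t ^+ 2).
Definition ninf (y : S -> R) i := \big[Num.max/0]_(s | tag s == i) `|y s|.
Definition f (x : {ptws T -> R}) : {ptws S -> R} := fun s => x (h' s) / n2 x (tag s).
Definition g (y : {ptws S -> R}) : {ptws T -> R} := fun t => y (h t) / ninf y (p t).

Lemma ph' s : p (h' s) = tag s.
Proof. by rewrite -hp h'K. Qed.

Lemma n2_ge1 x i : Acube p x -> 1 <= n2 x i.
Proof.
move=> [_ /(_ i) [t [pt xt]]].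
rewrite -sqrtr1 ler_sqrt ?ler01 //.
rewrite (bigD1 t) ?pt //= -[1]addr0 lerD //.
  by rewrite -real_normK ?xt ?expr1n // num_real.
all: by apply: sumr_ge0 => *; rewrite sqr_ge0.
Qed.

Lemma n2_neq0 x i : Acube p x -> n2 x i != 0.
Proof. by move=> Ax; rewrite gt_eqF // (lt_le_trans ltr01) // n2_ge1. Qed.

Lemma ninf_prop y i : @Sph R I d y ->
  0 < ninf y i /\ exists s, tag s = i /\ `|y s| = ninf y i.
Proof.
move=> Sy.
have [s [si ys]] : exists s, tag s = i /\ y s != 0.
  apply: contrapT => H.
  have := Sy i; rewrite big1; first by move/esym/eqP; rewrite oner_eq0.
  move=> s /eqP si.
  have /eqP -> : y s == 0.
    by case: eqP => // /eqP ys; exfalso; apply: H; exists s.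
  by rewrite expr0n.
have pos : 0 < ninf y i.
  apply: (@lt_le_trans _ _ `|y s|); first by rewrite normr_gt0.
  rewrite /ninf; apply: bmax_ge; last by rewrite si.
split => //.
case: (@bmax_cases R S (fun s => tag s == i) (fun s => `|y s|)) => [E|[s' [/eqP s'i E]]].
- by move: pos; rewrite /ninf E ltxx.
- by exists s'; rewrite /ninf E.
Qed.

Lemma fA x : Acube p x -> @Sph R I d (f x).
Proof.
move=> Ax i; rewrite /f.
under eq_bigr => s /eqP si do rewrite si expr_div_n.
rewrite -mulr_suml (reindex h) /=; last exact: onW_bij (Bijective hK h'K).
under eq_bigl => t do rewrite (hp t).
under eq_bigr => t _ do rewrite (hK t).
rewrite /n2 sqr_sqrtr ?divff //.
  by have := n2_neq0 i Ax; rewrite /n2; apply: contra => /eqP ->; rewrite sqrtr0.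
by apply: sumr_ge0 => *; rewrite sqr_ge0.
Qed.

Lemma gA y : @Sph R I d y -> Acube p (g y).
Proof.
move=> Sy; split.
  move=> t; have [mpos _] := ninf_prop (p t) Sy.
  rewrite /g normrM normfV (gtr0_norm mpos) ler_pdivrMr // mul1r.
  by rewrite /ninf; apply: bmax_ge; rewrite hp.
move=> i; have [mpos [s [si ys]]] := ninf_prop i Sy.
exists (h' s); split; first by rewrite ph'.
by rewrite /g h'K ph' si normrM normfV (gtr0_norm mpos) ys divff // gt_eqF.
Qed.

Lemma ninf_f x i : Acube p x -> ninf (f x) i = (n2 x i)^-1.
Proof.
move=> Ax; have [H1 H2] := Ax; have [t [pt xt]] := H2 i.
have n0 : 0 <= n2 x i by apply: sqrtr_ge0.
rewrite /ninf; apply: (@bmax_eq _ _ _ _ (fun s => normr_ge0 _) _ (h t)).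
- by rewrite hp pt.
- by rewrite /f hK hp pt normrM xt mul1r normfV ger0_norm.
- move=> s /eqP si; rewrite /f si normrM normfV (ger0_norm n0).
  have npos : 0 < n2 x i by exact: lt_le_trans ltr01 (n2_ge1 i Ax).
  rewrite -[X in _ <= X]mul1r ler_pM2r; first exact: H1.
  by rewrite invr_gt0.
Qed.

Lemma gf x : Acube p x -> g (f x) = x.
Proof.
move=> Ax; apply/funext => t.
rewrite /g ninf_f // invrK /f hK hp divfK //.
exact: n2_neq0.
Qed.

Lemma n2_g y i : @Sph R I d y -> n2 (g y) i = (ninf y i)^-1.
Proof.
move=> Sy; have [mpos _] := ninf_prop i Sy.
rewrite /n2 /g.
under eq_bigr => t /eqP pt do rewrite pt expr_div_n.
rewrite -mulr_suml (reindex h') /=; last exact: onW_bij (Bijective h'K hK).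
under eq_bigl => s do rewrite (ph' s).
under eq_bigr => s _ do rewrite (h'K s).
by rewrite Sy mul1r -exprVn sqrtr_sqr gtr0_norm // invr_gt0.
Qed.

Lemma fg y : @Sph R I d y -> f (g y) = y.
Proof.
move=> Sy; apply/funext => s.
have [mpos _] := ninf_prop (tag s) Sy.
rewrite /f n2_g // invrK /g h'K ph' divfK //.
by rewrite gt_eqF.
Qed.

Lemma n2_cont i : continuous (fun z : {ptws T -> R} => n2 z i).
Proof.
move=> z; rewrite /n2.
apply: continuous_comp; last exact: sqrt_continuous.
apply: (continuous_big (@add_cont R)) => t _.
move=> w; rewrite /=.
have -> : (fun x : {ptws T -> R} => x t ^+ 2) = (fun x => x t * x t).
  by apply/funext => ?; rewrite expr2.
by apply: continuousM; apply: proj_cont.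
Qed.

Lemma ninf_cont i : continuous (fun z : {ptws S -> R} => ninf z i).
Proof.
move=> z; rewrite /ninf.
have := @continuous_big R S Num.max 0 (fun s => tag s == i) (@max_cont R) _ (index_enum _)
  (fun s (z : {ptws S -> R}) => `|z s|).
move=> H; apply: H => s _ w.
have := @continuous_comp _ _ _ (fun z : {ptws S -> R} => z s) (@Num.norm R R) w (@proj_cont R S s w).
apply. exact: (@norm_continuous R R^o).
Qed.

Lemma main_homeo : homeomorphic (@Acube R T I p) (@Sph R I d).
Proof.
exists f, g; split.
- exact: fA.
- exact: gA.
- exact: gf.
- exact: fg.
split; apply: continuous_in_subspaceT.
  move=> x; rewrite inE => Ax; apply: ptws_cont => s; rewrite /f.
  apply: continuousM; first exact: proj_cont.
  apply: continuousV; first exact: n2_neq0.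
  exact: n2_cont.
move=> y; rewrite inE => Sy; apply: ptws_cont => t; rewrite /g.
apply: continuousM; first exact: proj_cont.
apply: continuousV; first by have [mpos _] := ninf_prop (p t) Sy; rewrite gt_eqF.
exact: ninf_cont.
Qed.
End Main.

Lemma block_sum (R : realType) (I : finType) (d : I -> nat)
  (F : {i : I & 'I_(d i).+1} -> R) i :
  \sum_(j < (d i).+1) F (Tagged _ j) = \sum_(s | tag s == i) F s.
Proof.
have := @sig_big_dep R 0 +%R I (fun i => 'I_(d i).+1) (pred1 i) (fun _ _ => true)
  (fun k (j : 'I_(d k).+1) => F (Tagged (fun i => 'I_(d i).+1) j)).
rewrite big_pred1_eq => ->.
by apply: eq_big => [[k j]|[k j] _] //=; rewrite andbT.
Qed.

Lemma sph_eq (R : realType) (I : finType) (d : I -> nat) :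
  @sphere_prod R I d = @Sph R I d.
Proof.
apply/funext => y; apply/propext; rewrite /sphere_prod /Sph /=.
split => H i.
  exact: etrans (esym (block_sum (fun s => y s ^+ 2) i)) (H i).
exact: etrans (block_sum (fun s => y s ^+ 2) i) (H i).
Qed.

Unset Implicit Arguments.

Theorem proposition4p4 (R : realType) (W : finType) (r : nat)
    (N : 'I_r -> {set W}) :
  \bigcup_(i : 'I_r) N i = [set: W] ->
  let M := Mseq N in
  let U := \bigcup_(i : 'I_r | (0 < i)%N) tilde M i in
  homeomorphic (@RZ R _ (KN M)) (@sphere_prod R _ (fun i : 'I_r => #|M i|)) /\
  homeomorphic (@RZ R _ (@full_sub _ (KN M) U))
    (@sphere_prod R _ (fun i : {i : 'I_r | (0 < i)%N} => #|M (val i)|)).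
Proof.
move=> Hcov M U.
have memM : forall w, exists i, w \in M i.
  move=> w; have : w \in \bigcup_i N i by rewrite Hcov inE.
  case/bigcupP => i _ wi.
  case: (@arg_minnP _ i (fun j : 'I_r => w \in N j) (fun j : 'I_r => val j) wi).
  move=> j wj Hmin; exists j.
  rewrite /M /Mseq inE wj andbT; apply/negP => /bigcupP [k kj wk].
  by have := Hmin k wk; rewrite leqNgt kj.
have Mlt : forall w (i j : 'I_r), (i < j)%N -> w \in M i -> w \in M j -> False.
  move=> w i j ij; rewrite /M /Mseq !inE => /andP [_ wi] /andP [nb _].
  by move/negP: nb; apply; apply/bigcupP; exists i.
have uniqM : forall w i j, w \in M i -> w \in M j -> i = j.
  move=> w i j wi wj; case: (ltngtP i j) => [ij|ji|/val_inj //].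
    by case: (Mlt w i j ij wi wj).
  by case: (Mlt w j i ji wj wi).
have [pw Hpw] := fin_all_exists memM.
pose p1 (t : vert W r) : 'I_r := match t with inl w => pw w | inr i => i end.
have fib1 : forall i, [set t | p1 t == i] = tilde M i.
  move=> i; apply/setP => -[w|j]; rewrite !inE /tilde /=.
    rewrite mem_imset; last by move=> ? ? [].
    have -> : (inl w == inr i :> vert W r) = false by [].
    rewrite orbF; apply/eqP/idP => [<-|wi]; first exact: Hpw.
    exact: (uniqM w _ _ (Hpw w) wi).
  have -> : (inr j == inr i :> vert W r) = (j == i) by [].
  apply/eqP/idP => [->|].
    by rewrite eqxx orbT.
  case/orP => [/imsetP [? _ //]|/eqP [] //].
have card1 : forall i, #|[set t | p1 t == i]| = #|M i|.+1.
  move=> i; rewrite fib1 /tilde finset.setUC cardsU1 card_imset; last by move=> ? ? [].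
  suff -> : inr i \notin [set inl x | x in M i] by [].
  by apply/imsetP => -[? _ //].
split.
  have [h [h' [hK h'K hp]]] := @bij_exists _ _ (fun i : 'I_r => #|M i|) p1 card1.
  rewrite (@RZ_Acube R _ _ p1); last first.
    move=> sigma; rewrite /KN; split.
      by move/forallP => H i; rewrite fib1; apply/negP; apply: H.
    by move=> H; apply/forallP => i; apply/negP; rewrite -fib1; apply: H.
  rewrite sph_eq; exact: main_homeo hK h'K hp.
have p1fib : forall t i, (t \in tilde M i) = (p1 t == i).
  by move=> t i; rewrite -fib1 inE.
have pos : forall t, t \in U -> (0 < p1 t)%N.
  move=> t /bigcupP [i ipos]; rewrite p1fib => /eqP ->; exact: ipos.
have inU : forall t, (0 < p1 t)%N -> t \in U.
  by move=> t pt; apply/bigcupP; exists (p1 t) => //; rewrite p1fib.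
have [p2 Hp2] : exists p2 : {v : vert W r | v \in U} -> {i : 'I_r | (0 < i)%N},
    forall v, val (p2 v) = p1 (val v).
  apply: (@fin_all_exists _ (fun _ => {i : 'I_r | (0 < i)%N}) (fun v i2 => val i2 = p1 (val v))) => v.
  by exists (exist (fun i : 'I_r => is_true (0 < i)%N) (p1 (val v)) (pos _ (valP v))).
have fib2 : forall i2, val @: [set v | p2 v == i2] = [set t | p1 t == val i2].
  move=> i2; apply/setP => t; rewrite inE; apply/imsetP/eqP.
    by move=> [v]; rewrite inE => /eqP <- ->; rewrite Hp2.
  move=> pt; have tU : t \in U by apply: inU; rewrite pt; exact: (valP i2).
  exists (exist (fun v => is_true (v \in U)) t tU) => //.
  by rewrite inE; apply/eqP/val_inj; rewrite Hp2.
have card2 : forall i2, #|[set v | p2 v == i2]| = #|M (val i2)|.+1.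
  by move=> i2; rewrite -(card_imset _ val_inj) fib2 card1.
have [h [h' [hK h'K hp]]] :=
  @bij_exists _ _ (fun i2 : {i : 'I_r | (0 < i)%N} => #|M (val i2)|) p2 card2.
rewrite (@RZ_Acube R _ _ p2); last first.
  move=> tau; rewrite /full_sub /KN; split.
    move/forallP => H i2 Hsub; apply: (negP (H (val i2))).
    by rewrite -fib1 -fib2; apply: imsetS.
  move=> H; apply/forallP => i; apply/negP => Hsub.
  case: (boolP (0 < i)%N) => ipos.
    apply: (H (exist (fun i : 'I_r => is_true (0 < i)%N) i ipos)).
    apply/fintype.subsetP => v; rewrite inE => /eqP pv.
    have : val v \in tilde M i by rewrite p1fib -Hp2 pv.
    by move/(fintype.subsetP Hsub) => /imsetP [x xt E]; rewrite (val_inj E).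
  have : inr i \in tilde M i by rewrite p1fib.
  move/(fintype.subsetP Hsub) => /imsetP [x _ E].
  by have := pos _ (valP x); rewrite -E /= (negbTE ipos).
rewrite sph_eq; exact: main_homeo hK h'K hp.
Qed.
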